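(* Let $E=\tfrac12(\mathbb 1+\vec e\cdot\vec\sigma)$ be an unbiased qubit effect with $\|\vec e\|<1$, and let $B=\tfrac12(b^0\mathbb 1+\vec b\cdot\vec\sigma)$ be any qubit effect. If the two-outcome POVMs $(E,\mathbb 1-E)$ and $(B,\mathbb 1-B)$ are jointly measurable, then $$\|\vec e\|^2+\|\vec b\|^2-(\vec e\cdot\vec b)^2\le 1,$$ equivalently $\|\vec e+\vec b\|+\|\vec e-\vec b\|\le 2$. Conversely, if $B$ is also unbiased ($b^0=1$) and $\|\vec e\|^2+\|\vec b\|^2\le 1+(\vec e\cdot\vec b)^2$, then $(E,\mathbb 1-E)$ and $(B,\mathbb 1-B)$ are jointly measurable.
   Context: $\vec\sigma=(\sigma_1,\sigma_2,\sigma_3)$ are the Pauli matrices, $\sigma_1=\begin{pmatrix}0&1\\1&0\end{pmatrix}$, $\sigma_2=\begin{pmatrix}0&-i\\i&0\end{pmatrix}$, $\sigma_3=\begin{pmatrix}1&0\\0&-1\end{pmatrix}$. A qubit effect is a $2\times 2$ matrix $E$ with $0\le E\le\mathbb 1$; every effect can be written $E=\tfrac12(e^0\mathbb 1+\vec e\cdot\vec\sigma)$ with $(e^0,\vec e)\in\mathbb R^4$, $\|\vec e\|\le\min\{e^0,2-e^0\}$; it is unbiased if $e^0=1$. Joint measurability of two POVMs $(E_i)$, $(B_j)$: existence of a POVM $(N_{ij})$ with $\sum_jN_{ij}=E_i$, $\sum_iN_{ij}=B_j$. *)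

(* Defs.v *)
From HB Require Import structures.
From mathcomp Require Import all_boot all_order all_algebra.
From mathcomp.real_closed Require Import complex.
Set Implicit Arguments. Unset Strict Implicit. Unset Printing Implicit Defensive.
Import Order.TTheory GRing.Theory Num.Theory.
Local Open Scope ring_scope.
Local Open Scope complex_scope.

Section Qubit.
Variable R : rcfType.

Definition adjmx m n (A : 'M[R[i]]_(m, n)) : 'M[R[i]]_(n, m) :=
  \matrix_(i, j) conjc (A j i).

(* Positive semidefinite 2x2 complex matrix: <v, A v> >= 0 for all v
   (in R[i], 0 <= z means z is real and nonnegative). *)
Definition psd (A : 'M[R[i]]_2) : Prop :=
  forall v : 'cV[R[i]]_2, 0 <= (adjmx v *m A *m v) 0 0.

Definition loewner_le (A B : 'M[R[i]]_2) : Prop := psd (B - A).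

Definition is_effect (E : 'M[R[i]]_2) : Prop := loewner_le 0 E /\ loewner_le E 1.

Definition sigma1 : 'M[R[i]]_2 :=
  \matrix_(i < 2, j < 2) (if i == j then 0 else 1).
Definition sigma2 : 'M[R[i]]_2 :=
  \matrix_(i < 2, j < 2)
    (if i == j then 0 else if (i == 0 :> nat) then - 'i else 'i).
Definition sigma3 : 'M[R[i]]_2 :=
  \matrix_(i < 2, j < 2)
    (if i == j then (if (i == 0 :> nat) then 1 else -1) else 0).

Definition pauli (k : 'I_3) : 'M[R[i]]_2 :=
  if (k == 0 :> nat) then sigma1 else if (k == 1 :> nat) then sigma2 else sigma3.

Definition qubit_op (e0 : R) (e : 'rV[R]_3) : 'M[R[i]]_2 :=
  (2%:R)^-1 *: (e0%:C%:M + \sum_(k < 3) (e 0 k)%:C *: pauli k).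

Definition dot3 (e b : 'rV[R]_3) : R := \sum_(k < 3) e 0 k * b 0 k.
Definition norm3 (e : 'rV[R]_3) : R := Num.sqrt (dot3 e e).

Definition is_povm (I : finType) (M : I -> 'M[R[i]]_2) : Prop :=
  (forall x, loewner_le 0 (M x)) /\ \sum_x M x = 1.

Definition jointly_measurable (I J : finType)
    (E : I -> 'M[R[i]]_2) (B : J -> 'M[R[i]]_2) : Prop :=
  exists N : I -> J -> 'M[R[i]]_2,
    is_povm (fun p : I * J => N p.1 p.2) /\
    (forall x, \sum_y N x y = E x) /\ (forall y, \sum_x N x y = B y).

Definition binpovm (A : 'M[R[i]]_2) : bool -> 'M[R[i]]_2 :=
  fun b => if b then A else 1 - A.

End Qubit.

(* Main.v *)
Require Import Defs.
From HB Require Import structures.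
From mathcomp Require Import all_boot all_order all_algebra.
From mathcomp.real_closed Require Import complex.
From mathcomp Require Import ring lra.
Set Implicit Arguments. Unset Strict Implicit. Unset Printing Implicit Defensive.
Import Order.TTheory GRing.Theory Num.Theory.
Local Open Scope ring_scope.
Local Open Scope complex_scope.

Section S.
Variable R : rcfType.

Definition cv (p q : R[i]) : 'cV[R[i]]_2 := \col_(k < 2) (if k == 0 then p else q).

Definition F (X : 'M[R[i]]_2) p q :=
  p^* * X 0 0 * p + p^* * X 0 1 * q + q^* * X 1 0 * p + q^* * X 1 1 * q.

Lemma formE X p q : (adjmx (cv p q) *m X *m cv p q) 0 0 = F X p q.
Proof.
rewrite /F !mxE !big_ord_recl !big_ord0 /= !mxE !big_ord_recl !big_ord0 /= !mxE /=.
have -> : lift ord0 ord0 = 1 :> 'I_2 by apply/val_inj.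
rewrite !addr0. ring.
Qed.

Definition G (X : 'M[R[i]]_2) (a b c d : R) : R :=
  (a^+2 + b^+2) * complex.Re (X 0 0) + (c^+2 + d^+2) * complex.Re (X 1 1)
  + (a*c + b*d) * (complex.Re (X 0 1) + complex.Re (X 1 0)) + (a*d - b*c) * (complex.Im (X 1 0) - complex.Im (X 0 1)).

Lemma ReF X a b c d : complex.Re (F X (a +i* b) (c +i* d)) = G X a b c d.
Proof.
rewrite /F /G.
move: (X 0 0) (X 0 1) (X 1 0) (X 1 1) => [x1 y1] [x2 y2] [x3 y3] [x4 y4].
simpc. rewrite /=. ring.
Qed.

Lemma psdG X a b c d : psd X -> 0 <= G X a b c d.
Proof.
move=> /(_ (cv (a +i* b) (c +i* d))); rewrite formE lecE => /andP[_].
by rewrite ReF.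
Qed.
Lemma inv2C : (2%:R : R[i])^-1 = ((2%:R)^-1 : R)%:C.
Proof. by rewrite fmorphV rmorph_nat. Qed.

Lemma l1 : lift ord0 ord0 = 1 :> 'I_3. Proof. by apply/val_inj. Qed.
Lemma l2 : lift ord0 (lift ord0 ord0) = 2%:R :> 'I_3. Proof. by apply/val_inj. Qed.

Ltac cfin := rewrite ?mulr0 ?mul0r ?mulr1 ?mul1r ?mulr1n ?addr0 ?add0r ?mulrN1 ?mulN1r;
  simpc; rewrite /=; congr (_ +i* _); rewrite ?mulr0 ?mul0r ?addr0 ?add0r ?subr0 ?sub0r; try field; try done.

Lemma q00 c (v : 'rV[R]_3) : qubit_op c v 0 0 = ((c + v 0 2%:R)/2%:R) +i* 0.
Proof.
rewrite /qubit_op !mxE !big_ord_recl big_ord0 /pauli /= !mxE /= inv2C l2 l1.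
cfin.
Qed.
Lemma q11 c (v : 'rV[R]_3) : qubit_op c v 1 1 = ((c - v 0 2%:R)/2%:R) +i* 0.
Proof.
rewrite /qubit_op !mxE !big_ord_recl big_ord0 /pauli /= !mxE /= inv2C l2 l1.
cfin.
Qed.
Lemma q01 c (v : 'rV[R]_3) : qubit_op c v 0 1 = (v 0 0 /2%:R) +i* (- v 0 1 / 2%:R).
Proof.
rewrite /qubit_op !mxE !big_ord_recl big_ord0 /pauli /= !mxE /= inv2C l2 l1.
cfin.
Qed.
Lemma q10 c (v : 'rV[R]_3) : qubit_op c v 1 0 = (v 0 0 /2%:R) +i* (v 0 1 / 2%:R).
Proof.
rewrite /qubit_op !mxE !big_ord_recl big_ord0 /pauli /= !mxE /= inv2C l2 l1.
cfin.
Qed.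

Lemma ReD (x y : R[i]) : complex.Re (x + y) = complex.Re x + complex.Re y.
Proof. by case: x; case: y. Qed.
Lemma ImD (x y : R[i]) : complex.Im (x + y) = complex.Im x + complex.Im y.
Proof. by case: x; case: y. Qed.
Lemma ReB (x y : R[i]) : complex.Re (x - y) = complex.Re x - complex.Re y.
Proof. by case: x; case: y. Qed.
Lemma ImB (x y : R[i]) : complex.Im (x - y) = complex.Im x - complex.Im y.
Proof. by case: x; case: y. Qed.

Lemma GD X Y a b c d : G (X + Y) a b c d = G X a b c d + G Y a b c d.
Proof. rewrite /G !mxE !ReD !ImD; ring. Qed.
Lemma GB X Y a b c d : G (X - Y) a b c d = G X a b c d - G Y a b c d.
Proof. rewrite /G !mxE !ReB !ImB; ring. Qed.
Lemma G1 a b c d : G 1 a b c d = a^+2 + b^+2 + c^+2 + d^+2.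
Proof. rewrite /G !mxE /=; ring. Qed.
Lemma Gq c0 v a b c d : G (qubit_op c0 v) a b c d =
  (c0 * (a^+2 + b^+2 + c^+2 + d^+2) + v 0 0 * (2%:R * (a*c+b*d))
   + v 0 1 * (2%:R * (a*d - b*c)) + v 0 2%:R * (a^+2 + b^+2 - c^+2 - d^+2)) / 2%:R.
Proof. rewrite /G q00 q11 q01 q10 /=. field. done. Qed.
Lemma Gtr X a b c d : G X a b c d + G X (-c) d a (-b) =
  (a^+2 + b^+2 + c^+2 + d^+2) * (complex.Re (X 0 0) + complex.Re (X 1 1)).
Proof. rewrite /G; ring. Qed.

Lemma sq0 (x t : R) : 0 <= t -> x^+2 + t = 0 -> x = 0.
Proof.
move=> t0 h; have : x^+2 = 0 by apply/eqP; rewrite eq_le sqr_ge0 andbT; nra.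
by move/eqP; rewrite sqrf_eq0 => /eqP.
Qed.

Lemma unitvec (x y z : R) : exists a b c d : R,
  a^+2 + b^+2 + c^+2 + d^+2 = 1 /\
  2%:R * (a*c+b*d) * x + 2%:R * (a*d - b*c) * y + (a^+2 + b^+2 - c^+2 - d^+2) * z
   = - Num.sqrt (x^+2 + y^+2 + z^+2).
Proof.
set S := x^+2 + y^+2 + z^+2.
have S0 : 0 <= S by rewrite /S; nra.
set L := Num.sqrt S.
have L0 : 0 <= L by rewrite sqrtr_ge0.
have LS : L^+2 = S by rewrite sqr_sqrtr.
have [Le0|Ln0] := eqVneq L 0.
  have z0 : z = 0.
    apply: (@sq0 _ (x^+2 + y^+2)); first nra.
    have : S = 0 by rewrite -LS Le0 expr0n.
    move=> h; rewrite -h /S; ring.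
  exists 1, 0, 0, 0; rewrite Le0 z0; split; ring.
have hxy : x^+2 + y^+2 = L^+2 - z^+2 by rewrite LS /S; ring.
have zL : z <= L by nra.
have [zeq|zn] := eqVneq z L.
  have x0 : x = 0.
    apply: (@sq0 _ (y^+2)); first nra. rewrite hxy zeq; ring.
  have y0 : y = 0.
    apply: (@sq0 _ (x^+2)); first nra. rewrite addrC hxy zeq; ring.
  exists 0, 0, 1, 0; rewrite x0 y0 zeq; split; ring.
have Lz : L - z != 0 by rewrite subr_eq0 eq_sym.
have Lp : 0 < L by rewrite lt_neqAle eq_sym Ln0.
have zL' : z < L by rewrite lt_neqAle zn.
set w := (L - z) / (2%:R * L).
have w0 : 0 <= w by rewrite /w divr_ge0 //; nra.
set a := Num.sqrt w.
have ha : a^+2 = w by rewrite sqr_sqrtr.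
exists a, 0, (- x * a / (L - z)), (- y * a / (L - z)); split.
  have -> : a ^+ 2 + 0 ^+ 2 + (- x * a / (L - z)) ^+ 2 + (- y * a / (L - z)) ^+ 2
    = a^+2 + a^+2 * (x^+2+y^+2)/(L-z)^+2 by field.
  rewrite ha hxy /w; field. rewrite Lz Ln0 /=. done.
have -> : 2%:R * (a * (- x * a / (L - z)) + 0 * (- y * a / (L - z))) * x +
   2%:R * (a * (- y * a / (L - z)) - 0 * (- x * a / (L - z))) * y +
   (a ^+ 2 + 0 ^+ 2 - (- x * a / (L - z)) ^+ 2 - (- y * a / (L - z)) ^+ 2) * z
  = -(2%:R * a^+2/(L-z)) * (x^+2+y^+2) + (a^+2 - a^+2 * (x^+2+y^+2)/(L-z)^+2) * z by field.
rewrite ha hxy /w; field. rewrite Lz Ln0 /=. done.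
Qed.

Lemma dot3E (v v' : 'rV[R]_3) : dot3 v v' = v 0 0 * v' 0 0 + v 0 1 * v' 0 1 + v 0 2%:R * v' 0 2%:R.
Proof. by rewrite /dot3 !big_ord_recl big_ord0 l2 l1 addr0 addrA. Qed.

Lemma normE (v : 'rV[R]_3) : norm3 v = Num.sqrt (v 0 0 ^+ 2 + v 0 1 ^+ 2 + v 0 2%:R ^+2).
Proof. by rewrite /norm3 dot3E !expr2. Qed.

Lemma sqrt_sq (x : R) : 0 <= x -> Num.sqrt x ^+ 2 = x.
Proof. exact: sqr_sqrtr. Qed.

Lemma le_sq (x y : R) : 0 <= x -> 0 <= y -> x^+2 <= y^+2 -> x <= y.
Proof. move=> x0 y0 h; rewrite leNgt; apply/negP => hl; nra. Qed.

Lemma realA (s d P q : R) : 0 <= s -> 0 <= d -> s^+2 = P + 2%:R * q -> d^+2 = P - 2%:R * q ->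
  s + d <= 2%:R -> P - q^+2 <= 1 /\ P <= 2%:R.
Proof.
move=> s0 d0 hs hd hsd.
have h4 : (s + d)^+2 <= 2%:R^+2 by nra.
have P2 : P <= 2%:R by nra.
have sdP : s * d <= 2%:R - P by nra.
have sd0 : 0 <= s * d by nra.
have : (s*d)^+2 <= (2%:R - P)^+2 by nra.
rewrite exprMn hs hd => h; split; [nra | done].
Qed.

Lemma realB' (s d P q : R) : 0 <= s -> 0 <= d -> s^+2 = P + 2%:R * q -> d^+2 = P - 2%:R * q ->
  P <= 2%:R -> P - q^+2 <= 1 -> s + d <= 2%:R.
Proof.
move=> s0 d0 hs hd P2 hq.
have sdP : s * d <= 2%:R - P.
  apply: le_sq; [nra | nra | ]. rewrite exprMn hs hd; nra.
apply: le_sq; nra.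
Qed.

Lemma necess (e : 'rV[R]_3) b0 b :
  jointly_measurable (binpovm (qubit_op 1 e)) (binpovm (qubit_op b0 b)) ->
  norm3 (e + b) + norm3 (e - b) <= 2%:R.
Proof.
move=> [N [[Hpsd _] [HE HB]]].
have pN x y : psd (N x y) by have := Hpsd (x, y); rewrite /loewner_le subr0.
have h1 := HE true; have h2 := HB true; have h3 := HE false.
rewrite big_bool /= in h1; rewrite big_bool /= in h2; rewrite big_bool /= in h3.
have etf : N true false = qubit_op 1 e - N true true by rewrite -h1 addrC addrK.
have eft : N false true = qubit_op b0 b - N true true by rewrite -h2 addrC addrK.
have eff : N false false = 1 - qubit_op 1 e - (qubit_op b0 b - N true true).
  by rewrite -eft -h3 addrC addrK.
rewrite !normE !mxE.
have [a [b1 [c [d [n1 r1]]]]] := unitvec (e 0 0 + b 0 0) (e 0 1 + b 0 1) (e 0 2%:R + b 0 2%:R).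
have [a' [b1' [c' [d' [n1' r1']]]]] := unitvec (e 0 0 - b 0 0) (e 0 1 - b 0 1) (e 0 2%:R - b 0 2%:R).
have f1 := psdG a b1 c d (pN true true).
have f2 := psdG (-c) d a (-b1) (pN false false).
have f3 := psdG a' b1' c' d' (pN true false).
have f4 := psdG (-c') d' a' (-b1') (pN false true).
rewrite eff !GB G1 !Gq in f2.
rewrite etf GB Gq in f3.
rewrite eft GB Gq in f4.
have t1 := Gtr (N true true) a b1 c d.
have t2 := Gtr (N true true) a' b1' c' d'.
rewrite n1 mul1r in t1; rewrite n1' mul1r in t2.
set T := _ + complex.Re _ in t1 t2.
set s1 := Num.sqrt _ in r1. set s2 := Num.sqrt _ in r1'.
have n2 : (- c) ^+ 2 + d ^+ 2 + a ^+ 2 + (- b1) ^+ 2 = 1 by rewrite -n1; ring.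
have n2' : (- c') ^+ 2 + d' ^+ 2 + a' ^+ 2 + (- b1') ^+ 2 = 1 by rewrite -n1'; ring.
rewrite n2 in f2; rewrite n2' in f4; rewrite n1' in f3.
have k1 : 0 <= T + (1 - b0) / 2%:R - s1 / 2%:R.
  move: f1 f2 t1 r1; set g1 := G _ a b1 c d; set g2 := G _ (-c) d a (-b1).
  move=> f1 f2 t1 r1; lra.
have k2 : 0 <= - T + (1 + b0) / 2%:R - s2 / 2%:R.
  move: f3 f4 t2 r1'; set g1 := G _ a' b1' c' d'; set g2 := G _ (-c') d' a' (-b1').
  move=> f3 f4 t2 r1'; lra.
rewrite -/s1 -/s2; lra.
Qed.

Lemma Fq c0 v a b c d : F (qubit_op c0 v) (a +i* b) (c +i* d) = (G (qubit_op c0 v) a b c d) +i* 0.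
Proof.
rewrite /F /G q00 q01 q10 q11 /=. simpc. rewrite /=. congr (_ +i* _); field; done.
Qed.

Lemma cvE (w : 'cV[R[i]]_2) : w = cv (w 0 0) (w 1 0).
Proof.
apply/matrixP => i j; rewrite !mxE (_ : j = 0); last by apply/val_inj; case: j => [[]].
by case: i => [[|[|//]] Hi]; congr (w _ _); apply/val_inj.
Qed.

Lemma psd_q (c0 : R) (v : 'rV[R]_3) : 0 <= c0 -> v 0 0 ^+2 + v 0 1 ^+2 + v 0 2%:R ^+2 <= c0^+2 -> psd (qubit_op c0 v).
Proof.
move=> c00 hv w; rewrite (cvE w) formE.
case: (w 0 0) => a b; case: (w 1 0) => c d.
rewrite Fq lecE /= eqxx /= Gq.
set n := a^+2 + b^+2 + c^+2 + d^+2.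
set r0 := 2%:R * (a * c + b * d); set r1 := 2%:R * (a * d - b * c).
set r2 := a ^+ 2 + b ^+ 2 - c ^+ 2 - d ^+ 2.
set v0 := v 0 0; set v1 := v 0 1; set v2 := v 0 2%:R.
have rr : r0^+2 + r1^+2 + r2^+2 = n^+2 by rewrite /r0 /r1 /r2 /n; ring.
have n0 : 0 <= n by rewrite /n; nra.
set k := v0 * r0 + v1 * r1 + v2 * r2.
have cs : k^+2 <= (v0^+2+v1^+2+v2^+2) * (r0^+2 + r1^+2 + r2^+2).
  have -> : (v0^+2+v1^+2+v2^+2) * (r0^+2 + r1^+2 + r2^+2) =
    k^+2 + ((v0*r1 - v1*r0)^+2 + (v0*r2 - v2*r0)^+2 + (v1*r2 - v2*r1)^+2) by rewrite /k; ring.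
  rewrite lerDl; apply: addr_ge0; [apply: addr_ge0|]; apply: sqr_ge0.
rewrite rr in cs.
have kb : - k <= c0 * n.
  have [kp|kn] := lerP 0 k; first nra.
  apply: le_sq; [nra|nra|]. rewrite sqrrN exprMn. apply: le_trans cs _. apply: ler_wpM2r; [exact: sqr_ge0 | exact: hv].
have -> : (c0 * n + v0 * r0 + v1 * r1 + v2 * r2) / 2%:R = (c0 * n + k) / 2%:R by rewrite /k; ring.
apply: divr_ge0; lra.
Qed.

Lemma eq2 (A B : 'M[R[i]]_2) : A 0 0 = B 0 0 -> A 0 1 = B 0 1 -> A 1 0 = B 1 0 -> A 1 1 = B 1 1 -> A = B.
Proof.
move=> h00 h01 h10 h11; apply/matrixP => i j.
case: i => [[|[|//]] Hi]; case: j => [[|[|//]] Hj].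
- have -> : Ordinal Hi = 0 by apply/val_inj.
  by have -> : Ordinal Hj = 0 by apply/val_inj.
- have -> : Ordinal Hi = 0 by apply/val_inj.
  by have -> : Ordinal Hj = 1 by apply/val_inj.
- have -> : Ordinal Hi = 1 by apply/val_inj.
  by have -> : Ordinal Hj = 0 by apply/val_inj.
- have -> : Ordinal Hi = 1 by apply/val_inj.
  by have -> : Ordinal Hj = 1 by apply/val_inj.
Qed.

Lemma nsq (v : 'rV[R]_3) : norm3 v ^+ 2 = v 0 0 ^+ 2 + v 0 1 ^+ 2 + v 0 2%:R ^+2.
Proof. rewrite normE sqrt_sq //; nra. Qed.

Lemma dsq (v : 'rV[R]_3) : dot3 v v = v 0 0 ^+ 2 + v 0 1 ^+ 2 + v 0 2%:R ^+2.
Proof. rewrite dot3E; ring. Qed.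

Lemma eqle (x y : R) : x = y -> x <= y. Proof. by move->. Qed.

Lemma mD (A B : 'M[R[i]]_2) i j : (A + B) i j = A i j + B i j. Proof. by rewrite mxE. Qed.
Lemma mB (A B : 'M[R[i]]_2) i j : (A - B) i j = A i j - B i j. Proof. by rewrite !mxE. Qed.
Lemma m1 i j : (1 : 'M[R[i]]_2) i j = (i == j)%:R. Proof. by rewrite !mxE. Qed.

End S.

Ltac cfin := rewrite ?mulr0 ?mul0r ?mulr1 ?mul1r ?mulr1n ?addr0 ?add0r ?mulrN1 ?mulN1r;
  simpc; rewrite /=; congr (_ +i* _); rewrite ?mulr0 ?mul0r ?addr0 ?add0r ?subr0 ?sub0r; try field; try done.
Ltac msolve := apply: eq2; rewrite ?mD ?mB ?m1 ?q00 ?q01 ?q10 ?q11 ?mxE /=; cfin.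

Lemma norm_sq (R : rcfType) (v w : 'rV[R]_3) :
  norm3 (v + w) ^+ 2 = norm3 v ^+ 2 + norm3 w ^+ 2 + 2%:R * dot3 v w /\
  norm3 (v - w) ^+ 2 = norm3 v ^+ 2 + norm3 w ^+ 2 - 2%:R * dot3 v w.
Proof. rewrite !nsq dot3E !mxE; split; ring. Qed.

Lemma cs3 (R : rcfType) (v w : 'rV[R]_3) : dot3 v w ^+ 2 <= norm3 v ^+ 2 * norm3 w ^+ 2.
Proof.
rewrite !nsq dot3E.
set v0 := v 0 0; set v1 := v 0 1; set v2 := v 0 2%:R.
set r0 := w 0 0; set r1 := w 0 1; set r2 := w 0 2%:R.
have -> : (v0^+2+v1^+2+v2^+2) * (r0^+2 + r1^+2 + r2^+2) =
    (v0 * r0 + v1 * r1 + v2 * r2)^+2 + ((v0*r1 - v1*r0)^+2 + (v0*r2 - v2*r0)^+2 + (v1*r2 - v2*r1)^+2) by ring.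
rewrite lerDl; apply: addr_ge0; [apply: addr_ge0|]; apply: sqr_ge0.
Qed.

Lemma psd_q' (R : rcfType) (c0 : R) (v : 'rV[R]_3) : 0 <= c0 -> norm3 v ^+ 2 <= c0^+2 -> psd (qubit_op c0 v).
Proof. by move=> h1; rewrite nsq; apply: psd_q. Qed.

Lemma nsqZ (R : rcfType) (a : R) (v : 'rV[R]_3) : norm3 (a *: v) ^+ 2 = a^+2 * norm3 v ^+ 2.
Proof. rewrite !nsq !mxE; ring. Qed.

Lemma m00 (R : rcfType) : (1 : 'M[R[i]]_2) 0 0 = 1 +i* 0. Proof. by rewrite mxE. Qed.
Lemma m01 (R : rcfType) : (1 : 'M[R[i]]_2) 0 1 = 0 +i* 0. Proof. by rewrite mxE. Qed.
Lemma m10 (R : rcfType) : (1 : 'M[R[i]]_2) 1 0 = 0 +i* 0. Proof. by rewrite mxE. Qed.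
Lemma m11 (R : rcfType) : (1 : 'M[R[i]]_2) 1 1 = 1 +i* 0. Proof. by rewrite mxE. Qed.

Lemma qD (R : rcfType) (c c' : R) v v' : qubit_op c v + qubit_op c' v' = qubit_op (c + c') (v + v').
Proof.
apply: eq2; rewrite !mD ?q00 ?q01 ?q10 ?q11; apply/eqP; rewrite eq_complex /= !mxE; apply/andP; split; apply/eqP; field; done.
Qed.
Lemma q1 (R : rcfType) : 1 = qubit_op (2%:R : R) 0.
Proof.
apply: eq2; rewrite ?m00 ?m01 ?m10 ?m11 ?q00 ?q01 ?q10 ?q11; apply/eqP; rewrite eq_complex /= !mxE; apply/andP; split; apply/eqP; field; done.
Qed.
Lemma qB (R : rcfType) (c c' : R) v v' : qubit_op c v - qubit_op c' v' = qubit_op (c - c') (v - v').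
Proof.
apply: eq2; rewrite !mB ?q00 ?q01 ?q10 ?q11; apply/eqP; rewrite eq_complex /= !mxE; apply/andP; split; apply/eqP; field; done.
Qed.

Local Close Scope complex_scope.
Unset Implicit Arguments.

Theorem mainTheorem3 (R : rcfType) (e : 'rV[R]_3) :
  norm3 e < 1 ->
  (forall (b0 : R) (b : 'rV[R]_3),
     is_effect (qubit_op b0 b) ->
     jointly_measurable (binpovm (qubit_op 1 e)) (binpovm (qubit_op b0 b)) ->
     norm3 e ^+ 2 + norm3 b ^+ 2 - dot3 e b ^+ 2 <= 1 /\
     norm3 (e + b) + norm3 (e - b) <= 2) /\
  (forall b : 'rV[R]_3,
     is_effect (qubit_op 1 b) ->
     norm3 e ^+ 2 + norm3 b ^+ 2 <= 1 + dot3 e b ^+ 2 ->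
     jointly_measurable (binpovm (qubit_op 1 e)) (binpovm (qubit_op 1 b))).
Proof.
move=> he; split.
  move=> b0 b _ hjm; have hsd := necess hjm.
  have [hs hd] := norm_sq e b.
  have [h _] := realA (sqrtr_ge0 _) (sqrtr_ge0 _) hs hd hsd.
  by split.
move=> b _ hP.
have [hs hd] := norm_sq e b.
have ne0 : 0 <= norm3 e by apply: sqrtr_ge0.
have nb0 : 0 <= norm3 b by apply: sqrtr_ge0.
have e1 : norm3 e ^+ 2 < 1 by nra.
have cs := cs3 e b.
have b1 : norm3 b ^+ 2 <= 1 by nra.
have hsd := realB' (sqrtr_ge0 _) (sqrtr_ge0 _) hs hd (ltac:(lra)) (ltac:(lra)).
set s := norm3 (e + b) in hs hsd.
set d := norm3 (e - b) in hd hsd.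
have s0 : 0 <= s by apply: sqrtr_ge0.
have d0 : 0 <= d by apply: sqrtr_ge0.
pose h := (2%:R : R)^-1.
pose N (x y : bool) := if x then (if y then qubit_op (s/2%:R) (h *: (e+b)) else qubit_op (1 - s/2%:R) (h *: (e - b)))
   else (if y then qubit_op (1 - s/2%:R) (h *: (b - e)) else qubit_op (s/2%:R) (h *: (-(e+b)))).
exists N; split; [split|split].
- have sd2 : s + d <= 2%:R by exact: hsd.
  have hbe : norm3 (b - e) ^+2 = d^+2 by rewrite /d !nsq !mxE; ring.
  have hne : norm3 (- (e + b)) ^+2 = s^+2 by rewrite /s !nsq !mxE; ring.
  set t := (2%:R : R)^-1.
  have t2 : t * 2%:R = 1 by rewrite mulVf // pnatr_eq0.
  have t0 : 0 < t by rewrite invr_gt0 ltr0n.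
  have key : t * d <= 1 - s * t.
    have : 0 <= t * (2%:R - s - d) by apply: mulr_ge0; [exact: ltW | lra].
    rewrite mulrBr mulrBr t2 => ?; lra.
  have st : 0 <= s * t by nra.
  have dt : 0 <= t * d by nra.
  case=> [[] []]; rewrite /loewner_le subr0 /N /=; apply: psd_q'; rewrite ?nsqZ ?hbe ?hne -/s -/d /h -/t.
  1-8: try (rewrite -exprMn ler_sqr ?nnegrE).
  1-16: rewrite ?[t * s]mulrC; lra.
  rewrite -pair_bigA !big_bool /N /h /= !qD q1.
  congr (qubit_op _ _); first by field.
  by apply/matrixP => i j; rewrite !mxE; ring.
  case; rewrite big_bool /N /h /= ?qD ?q1 ?qB; (congr (qubit_op _ _); first by field);
    by apply/matrixP => i j; rewrite !mxE; field.
  case; rewrite big_bool /N /h /= ?qD ?q1 ?qB; (congr (qubit_op _ _); first by field);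
    by apply/matrixP => i j; rewrite !mxE; field.
Qed.
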